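(* Let $p$, $n$, $b_1,\dots,b_n$, $h$, $b$, $\mathfrak{b}$, $\mathfrak{a}$, $d$, $D$, $H$ be as in the context. For each $s\in\mathbb{S}_{p^n}$, the equation $u+\mathfrak{a}(t)=p^n-1+s$ gives a bijection from $\{t\in\mathbb{S}_{p^n}(h):\mathfrak{a}(t)\succeq s\}$ to $\{u\in\mathbb{S}_{p^n}:u\succeq s\}$, with inverse $t=H(u-s,b)$. Furthermore, if $u$ corresponds to $t$ under this bijection, then $H(s,t)=H(u,b)$ and $D(s,t)=d(u)-d(u-s)$.
   Context: Let $p$ be a prime, $n\ge1$, $\mathbb{S}_{p^n}=\{0,\dots,p^n-1\}$; write $s\in\mathbb{S}_{p^n}$ as $s=\sum_{i=1}^n s_{(n-i)}p^{n-i}$ with digits in $\{0,\dots,p-1\}$, and $s\preceq t$ means $s_{(n-i)}\le t_{(n-i)}$ for all $i$. Let $b_1,\dots,b_n$ be integers prime to $p$, $\mathfrak{b}(s)=\sum_i s_{(n-i)}p^{n-i}b_i$, and for $t\in\mathbb{Z}$ let $\mathfrak{a}(t)\in\mathbb{S}_{p^n}$ be the unique element with $\mathfrak{b}(\mathfrak{a}(t))\equiv-t\pmod{p^n}$. Let $r:\mathbb{Z}\to\mathbb{S}_{p^n}$ be reduction mod $p^n$. Fix $h\in\mathbb{Z}$, let $\mathbb{S}_{p^n}(h)=\{t\in\mathbb{Z}:h\le t<h+p^n\}$, and let $b\in\mathbb{S}_{p^n}(h)$ be the unique element with $\mathfrak{a}(b)=p^n-1$. For $s\in\mathbb{S}_{p^n}$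 and $t\in\mathbb{S}_{p^n}(h)$ define $D(s,t)=\lfloor(\mathfrak{b}(s)+t-h)/p^n\rfloor$, $H(s,t)=h+r(\mathfrak{b}(s)+t-h)$, and $d(s)=D(s,b)$. *)

(* Defs.v *)
From mathcomp Require Import all_boot all_order all_algebra.
Set Implicit Arguments. Unset Strict Implicit. Unset Printing Implicit Defensive.
Import Order.TTheory GRing.Theory Num.Theory.
Local Open Scope ring_scope.

(* k-th base-p digit of s (coefficient of p^k), k = 0..n-1.
   Paper's s_(n-i) is digit p s (n-i). *)
Definition digit (p s k : nat) : nat := ((s %/ p ^ k) %% p)%N.

Definition preceq (p n s t : nat) : bool :=
  [forall k : 'I_n, (digit p s k <= digit p t k)%N].

(* frak b (s) = sum_{i=1}^n s_(n-i) p^(n-i) b_i ; with k = n - i *)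
Definition bfrak (p n : nat) (c : nat -> int) (s : nat) : int :=
  \sum_(k < n) (digit p s k)%:Z * (p ^ k)%:Z * c (n - k)%N.

Definition rmod (p n : nat) (z : int) : int := (z %% (p ^ n)%:Z)%Z.

Definition Dfun (p n : nat) (c : nat -> int) (h : int) (s : nat) (t : int) : int :=
  ((bfrak p n c s + t - h) %/ (p ^ n)%:Z)%Z.

Definition Hfun (p n : nat) (c : nat -> int) (h : int) (s : nat) (t : int) : int :=
  h + rmod p n (bfrak p n c s + t - h).

(* Main.v *)
Require Import Defs.
From mathcomp Require Import all_boot all_order all_algebra zify ring.
Import Order.TTheory GRing.Theory Num.Theory.
Set Implicit Arguments.

Section Dig.
Variable p : nat.
Hypothesis p0 : (0 < p)%N.

Lemma dm_uniq q r x : (r < p)%N -> x = (q * p + r)%N -> x %/ p = q /\ x %% p = r.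
Proof. move=> rp ->; rewrite divnMDl // divn_small // addn0 modnMDl modn_small //. Qed.

Arguments dm_uniq {q r x}.
Lemma digit0 x : digit p x 0 = x %% p.
Proof. by rewrite /digit expn0 divn1. Qed.

Lemma digitS x k : digit p x k.+1 = digit p (x %/ p) k.
Proof. by rewrite /digit expnS divnMA. Qed.

Lemma digit_lt x k : (digit p x k < p)%N.
Proof. by rewrite /digit ltn_pmod. Qed.

Lemma digit_sub k : forall u s, (s <= u)%N ->
  (forall j, (j <= k)%N -> (digit p s j <= digit p u j)%N) ->
  digit p (u - s) k = (digit p u k - digit p s k)%N.
Proof.
elim: k => [|k IH] u s su H.
  have := H 0%N (leqnn _); rewrite !digit0 => h0.
  have hq : (s %/ p <= u %/ p)%N by apply: leq_div2r.
  have e : (u - s = (u %/ p - s %/ p) * p + (u %% p - s %% p))%N.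
    have := divn_eq u p; have := divn_eq s p. nia.
  have rp : (u %% p - s %% p < p)%N. have := ltn_pmod u p0. lia.
  by have [_ ->] := dm_uniq rp e.
have := H 0%N isT; rewrite !digit0 => h0.
have hq : (s %/ p <= u %/ p)%N by apply: leq_div2r.
have e : (u - s = (u %/ p - s %/ p) * p + (u %% p - s %% p))%N.
  have := divn_eq u p; have := divn_eq s p. nia.
have rp : (u %% p - s %% p < p)%N. have := ltn_pmod u p0. lia.
have [e1 _] := dm_uniq rp e.
rewrite !digitS e1 IH // => j hj. by rewrite -!digitS H.
Qed.

Lemma digit_add k : forall y z,
  (forall j, (j <= k)%N -> (digit p y j + digit p z j < p)%N) ->
  digit p (y + z) k = (digit p y k + digit p z k)%N.
Proof.
elim: k => [|k IH] y z H.
  have := H 0%N (leqnn _); rewrite !digit0 => h0.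
  have e : (y + z = (y %/ p + z %/ p) * p + (y %% p + z %% p))%N.
    have := divn_eq y p; have := divn_eq z p. nia.
  by have [_ ->] := dm_uniq h0 e.
have := H 0%N isT; rewrite !digit0 => h0.
have e : (y + z = (y %/ p + z %/ p) * p + (y %% p + z %% p))%N.
  have := divn_eq y p; have := divn_eq z p. nia.
have [e1 _] := dm_uniq h0 e.
rewrite !digitS e1 IH // => j hj. by rewrite -!digitS H.
Qed.

Lemma digit_leq n : forall s u, (s < p ^ n)%N ->
  (forall k, (k < n)%N -> (digit p s k <= digit p u k)%N) -> (s <= u)%N.
Proof.
elim: n => [|n IH] s u sn H.
  by move: sn; rewrite expn0 ltnS leqn0 => /eqP ->.
have h0 := H 0%N isT; rewrite !digit0 in h0.
have hq : (s %/ p <= u %/ p)%N.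
  apply: IH.
    by rewrite ltn_divLR // -expnSr.
  by move=> k hk; rewrite -!digitS H.
have := divn_eq u p; have := divn_eq s p. nia.
Qed.

Lemma digit_max n k : (k < n)%N -> digit p (p ^ n).-1 k = p.-1.
Proof.
elim: n k => [|n IH] k // hk.
have pn : (0 < p ^ n)%N by rewrite expn_gt0 p0.
have e : ((p ^ n.+1).-1 = (p ^ n).-1 * p + p.-1)%N.
  rewrite expnSr. nia.
have rp : (p.-1 < p)%N by lia.
have [e1 e2] := dm_uniq rp e.
case: k hk => [|k] hk.
  by rewrite digit0 e2.
by rewrite digitS e1 IH.
Qed.


Lemma preceqP n s u : preceq p n s u -> forall j, (j < n)%N -> (digit p s j <= digit p u j)%N.
Proof. by move/forallP=> H j hj; exact: (H (Ordinal hj)). Qed.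

Lemma preceqI n s u : (forall j, (j < n)%N -> (digit p s j <= digit p u j)%N) -> preceq p n s u.
Proof. by move=> H; apply/forallP => k; apply: H. Qed.

Lemma bfrak_sub n c u s : (s <= u)%N -> preceq p n s u ->
  bfrak p n c (u - s) = (bfrak p n c u - bfrak p n c s)%R.
Proof.
move=> su /preceqP H; rewrite /bfrak -sumrB; apply: eq_bigr => k _.
rewrite digit_sub //; last by move=> j hj; apply: H; apply: leq_ltn_trans (ltn_ord k).
rewrite -subzn; last by apply: H.
by rewrite !mulrBl.
Qed.

End Dig.

Open Scope ring_scope.

Lemma modz_ex (N x y : int) : (x = y %[mod N])%Z -> exists k, x = y + k * N.
Proof.
move=> e; exists ((x %/ N)%Z - (y %/ N)%Z).
by rewrite {1}(divz_eq x N) {1}(divz_eq y N) e; ring.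
Qed.

Lemma modz_of (N x y k : int) : x = y + k * N -> (x = y %[mod N])%Z.
Proof. by move=> ->; rewrite addrC modzMDl. Qed.

Lemma divmod_char (N : nat) (x r k : int) : (0 < N)%N -> 0 <= r < N%:Z -> x = r + k * N%:Z ->
  (x %% N%:Z)%Z = r /\ (x %/ N%:Z)%Z = k.
Proof.
move=> N0 hr ->; split.
  by rewrite addrC modzMDl modz_small.
rewrite addrC divzMDl ?divz_small ?addr0 //.
by rewrite eqz_nat -lt0n.
Qed.


Lemma bfrak_inj (p n : nat) (c : nat -> int) (a : int -> nat) :
  (forall t : int, (a t < p ^ n)%N /\
     (bfrak p n c (a t) = - t %[mod (p ^ n)%:Z])%Z) ->
  forall x y, (x < p ^ n)%N -> (y < p ^ n)%N ->
  (bfrak p n c x = bfrak p n c y %[mod (p ^ n)%:Z])%Z -> x = y.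
Proof.
move=> ha x y hx hy exy.
set N := (p ^ n)%N in hx hy exy ha *.
have N0 : (0 < N)%N by apply: leq_ltn_trans hx.
pose f x := absz (bfrak p n c x %% N%:Z)%Z.
have fa : forall r, (r < N)%N -> f (a (- r%:Z)) = r.
  move=> r hr; rewrite /f (proj2 (ha _)) opprK modz_small //.
pose G (r : 'I_N) : 'I_N := Ordinal (proj1 (ha (- (r : nat)%:Z))).
have Ginj : injective G.
  move=> r1 r2 /(congr1 val) /= e; apply: val_inj => /=.
  by rewrite -(fa r1 (ltn_ord r1)) -(fa r2 (ltn_ord r2)) e.
have [g Gg gG] := injF_bij Ginj.
have ex : x = a (- (g (Ordinal hx) : nat)%:Z).
  by have := congr1 val (gG (Ordinal hx)).
have ey : y = a (- (g (Ordinal hy) : nat)%:Z).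
  by have := congr1 val (gG (Ordinal hy)).
have fxy : f x = f y by rewrite /f exy.
rewrite ex ey in fxy; rewrite !fa // in fxy.
by rewrite ex ey fxy.
Qed.


Arguments digit_lt {p}.
Arguments modz_ex {N x y}.
Arguments modz_of {N x y k}.
Arguments divmod_char {N x r k}.
Arguments digit_leq {p}.
Arguments preceqP {p n s u}.
Arguments preceqI {p n s u}.

Theorem lemma3p8 (p n : nat) (c : nat -> int) (h : int)
    (a : int -> nat) (b0 : int) :
  prime p -> (1 <= n)%N ->
  (forall i, (1 <= i <= n)%N -> coprimez (c i) p%:Z) ->
  (forall t : int, (a t < p ^ n)%N /\
     (bfrak p n c (a t) = - t %[mod (p ^ n)%:Z])%Z) ->
  h <= b0 < h + (p ^ n)%:Z -> a b0 = (p ^ n).-1 ->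
  forall s : nat, (s < p ^ n)%N ->
    (forall t : int, h <= t < h + (p ^ n)%:Z -> preceq p n s (a t) ->
       exists u : nat, [/\ (u < p ^ n)%N, preceq p n s u
                         & (u + a t = (p ^ n).-1 + s)%N]) /\
    (forall u : nat, (u < p ^ n)%N -> preceq p n s u ->
       let t := Hfun p n c h (u - s)%N b0 in
       [/\ h <= t < h + (p ^ n)%:Z, preceq p n s (a t)
         & (u + a t = (p ^ n).-1 + s)%N]) /\
    (forall (t : int) (u : nat), h <= t < h + (p ^ n)%:Z -> preceq p n s (a t) ->
       (u + a t = (p ^ n).-1 + s)%N -> Hfun p n c h (u - s)%N b0 = t) /\
    (forall (t : int) (u : nat), h <= t < h + (p ^ n)%:Z -> preceq p n s (a t) ->
       (u < p ^ n)%N -> preceq p n s u -> (u + a t = (p ^ n).-1 + s)%N ->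
       Hfun p n c h s t = Hfun p n c h u b0 /\
       Dfun p n c h s t = Dfun p n c h u b0 - Dfun p n c h (u - s)%N b0).
Proof.
move=> pp n1 _ ha hb0 hab0 s sN.
have p1 : (1 < p)%N := prime_gt1 pp.
have p0 : (0 < p)%N by lia.
have binj := @bfrak_inj p n c a ha.
rewrite /Hfun /Dfun /rmod.
set N := (p ^ n)%N in ha hb0 hab0 sN binj *.
have N0 : (0 < N)%N by rewrite expn_gt0 p0.
have Nz : N%:Z != 0 by rewrite eqz_nat -lt0n.
set M := N.-1 in hab0 *.
have dM : forall k, (k < n)%N -> digit p M k = p.-1 by move=> k hk; apply: digit_max.
have preM : forall x, preceq p n x M.
  move=> x; apply: preceqI => j hj; rewrite dM //; have := digit_lt p0 x j; lia.
have leqD : forall x y, (x < N)%N -> preceq p n x y -> (x <= y)%N.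
  by move=> x y hx /preceqP H; apply: (digit_leq p0 n x y hx).
have [kM bM] : exists kM, bfrak p n c M = - b0 + kM * N%:Z.
  by apply: modz_ex; rewrite -hab0; apply: (proj2 (ha b0)).
have key : forall t u, h <= t < h + N%:Z -> preceq p n s (a t) ->
    (u + a t = M + s)%N ->
    exists k, bfrak p n c (u - s) + b0 - h = (t - h) + k * N%:Z.
  move=> t u ht hst e.
  have sA := leqD _ _ sN hst.
  have AN := proj1 (ha t).
  have -> : (u - s = M - a t)%N by lia.
  rewrite bfrak_sub //; last by lia.
  have [kA bA] := modz_ex (proj2 (ha t)).
  exists (kM - kA); rewrite bM bA; lia.
have part3 : forall (t : int) (u : nat), h <= t < h + N%:Z -> preceq p n s (a t) ->
       (u + a t = M + s)%N -> h + ((bfrak p n c (u - s) + b0 - h) %% N%:Z)%Z = t.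
  move=> t u ht hst e; have [k ek] := key t u ht hst e.
  have hr : 0 <= t - h < N%:Z by lia.
  have [-> _] := divmod_char N0 hr ek.
  lia.
split.
  move=> t ht hst.
  have sA := leqD _ _ sN hst.
  have AN := proj1 (ha t).
  exists (M - a t + s)%N; split; last by lia.
  - by lia.
  apply: preceqI => j hj.
  have hst' := preceqP hst.
  have dd : forall k, (k < n)%N -> digit p (M - a t) k = (p.-1 - digit p (a t) k)%N.
    move=> k hk; rewrite digit_sub //; first by rewrite dM.
      by lia.
    move=> i hi; apply: (preceqP (preM _)); lia.
  rewrite digit_add //; first by lia.
  move=> i hi; rewrite dd; last by lia.
  have := hst' i (leq_ltn_trans hi hj); have := digit_lt p0 (a t) i; lia.
split.
  move=> u hu hsu /=.
  have su := leqD _ _ sN hsu.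
  set X := bfrak p n c (u - s) + b0 - h.
  have X0 := modz_ge0 X Nz.
  have XN : (X %% N%:Z < N%:Z)%Z by apply: ltz_pmod; rewrite ltz_nat.
  have eat : a (h + (X %% N%:Z)%Z) = (M - (u - s))%N.
    apply: binj; first exact: (proj1 (ha _)).
      by lia.
    rewrite bfrak_sub //; last by lia.
    have [kA bA] := modz_ex (proj2 (ha (h + (X %% N%:Z)%Z))).
    apply: (modz_of (k := kA - kM + (X %/ N%:Z)%Z)).
    rewrite bA bM.
    have := divz_eq X N%:Z; rewrite /X; lia.
  rewrite eat; split.
  - by lia.
  - apply: preceqI => j hj.
    have hsu' := preceqP hsu j hj.
    rewrite digit_sub //; last first.
        move=> i hi; apply: (preceqP (preM _)); lia.
      by lia.
    rewrite dM // digit_sub //; last by move=> i hi; apply: (preceqP hsu); lia.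
    have := digit_lt p0 u j; lia.
  - by lia.
split; first by exact: part3.
move=> t u ht hst hu hsu e.
have su := leqD _ _ sN hsu.
have [k ek] := key t u ht hst e.
have hr : 0 <= t - h < N%:Z by lia.
have [_ ed] := divmod_char N0 hr ek.
have bu : bfrak p n c u = bfrak p n c s + bfrak p n c (u - s).
  rewrite bfrak_sub //; ring.
have eu : bfrak p n c u + b0 - h = (bfrak p n c s + t - h) + k * N%:Z.
  rewrite bu; lia.
rewrite eu ed; split.
  by rewrite (modz_of (k := k) (erefl _)).
rewrite (addrC _ (k * _)) divzMDl //; ring.
Qed.
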